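(* Let $\mathcal{X}\subset\mathbb{R}^d$ be nonempty, closed, convex and compact with diameter $D:=\max_{x,y\in\mathcal{X}}\|x-y\|$. Let $\Phi:\mathcal{X}\to\mathbb{R}$ be differentiable with $L$-Lipschitz gradient, and set $G:=\max_{x\in\mathcal{X}}\|\nabla\Phi(x)\|$, $\Phi_{\max}:=\max_{\mathcal{X}}\Phi$, $\Phi_{\min}:=\min_{\mathcal{X}}\Phi$. Let $F(x)=-\nabla\Phi(x)+R(x)$ on $\mathcal{X}$. Let $0<\eta\le 1/L$ and run $x_{t+1}=\operatorname{Proj}_{\mathcal{X}}(x_t+\eta\nabla\Phi(x_t))$, $t=0,\dots,T-1$, from $x_0\in\mathcal{X}$. Let $\tilde t$ be uniformly distributed on $\{0,\dots,T-1\}$, independent of the iterates, and output $\tilde x_T:=x_{\tilde t}$; assume $R$ is square-integrable under the law of $\tilde x_T$ and define $E_T:=(\mathbb{E}[\|R(\tilde x_T)\|^2])^{1/2}$. Then $$\mathbb{E}[\operatorname{Gap}(\tilde x_T)]\le (D+\eta G)\sqrt{\frac{2(\Phi_{\max}-\Phi_{\min})}{T\eta}}+DE_T.$$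
   Context: For $\bar x\in\mathcal{X}$, the duality gap of $F$ is $\operatorname{Gap}(\bar x):=\max_{x\in\mathcal{X}}\langle F(\bar x),\bar x-x\rangle$ with the Euclidean inner product. $\operatorname{Proj}_{\mathcal{X}}$ is Euclidean projection onto $\mathcal{X}$. *)

(* Defs.v *)
From HB Require Import structures.
From mathcomp Require Import all_boot all_order all_algebra.
From mathcomp Require Import all_classical all_reals all_analysis.
Set Implicit Arguments. Unset Strict Implicit. Unset Printing Implicit Defensive.
Import Order.TTheory GRing.Theory Num.Theory.
Import numFieldNormedType.Exports.
Local Open Scope classical_set_scope.
Local Open Scope ring_scope.

Definition dotp {R : realType} {d : nat} (x y : 'rV[R]_d) : R :=
  \sum_(i < d) x ord0 i * y ord0 i.

Definition enorm {R : realType} {d : nat} (x : 'rV[R]_d) : R :=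
  Num.sqrt (dotp x x).

Definition convex_set_rV {R : realType} {d : nat} (X : set 'rV[R]_d) : Prop :=
  forall x y, X x -> X y -> forall l : R, 0 <= l <= 1 ->
    X (l *: x + (1 - l) *: y).

Definition is_max_on {T : Type} {R : realType} (S : set T) (f : T -> R) (m : R) : Prop :=
  (exists2 x, S x & f x = m) /\ (forall x, S x -> f x <= m).

Definition is_min_on {T : Type} {R : realType} (S : set T) (f : T -> R) (m : R) : Prop :=
  (exists2 x, S x & f x = m) /\ (forall x, S x -> m <= f x).

Definition is_proj {R : realType} {d : nat} (X : set 'rV[R]_d) (y p : 'rV[R]_d) : Prop :=
  X p /\ forall x, X x -> enorm (p - y) <= enorm (x - y).

(* duality gap of F at xb over X: max_{x in X} <F xb, xb - x>
   (a max over the compact X; written as a supremum) *)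
Definition Gap {R : realType} {d : nat} (X : set 'rV[R]_d)
  (F : 'rV[R]_d -> 'rV[R]_d) (xb : 'rV[R]_d) : R :=
  sup [set dotp (F xb) (xb - x) | x in X].

(* Main.v *)
Require Import Defs.
From HB Require Import structures.
From mathcomp Require Import all_boot all_order all_algebra.
From mathcomp Require Import all_classical all_reals all_analysis.
From mathcomp Require Import ring lra.
Import Order.TTheory GRing.Theory Num.Theory.
Import numFieldNormedType.Exports.
Local Open Scope classical_set_scope.
Local Open Scope ring_scope.

Lemma dotpC {R : realType} {d : nat} (u v : 'rV[R]_d) : dotp u v = dotp v u.
Proof. by apply: eq_bigr => i _; rewrite mulrC. Qed.

Lemma dotpDl {R : realType} {d : nat} (u v w : 'rV[R]_d) :
  dotp (u + v) w = dotp u w + dotp v w.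
Proof. by rewrite /dotp -big_split; apply: eq_bigr => i _; rewrite !mxE mulrDl. Qed.

Lemma dotpZl {R : realType} {d : nat} (a : R) (u w : 'rV[R]_d) :
  dotp (a *: u) w = a * dotp u w.
Proof. by rewrite /dotp mulr_sumr; apply: eq_bigr => i _; rewrite !mxE mulrA. Qed.

Lemma dotpNl {R : realType} {d : nat} (u w : 'rV[R]_d) :
  dotp (- u) w = - dotp u w.
Proof. by rewrite -scaleN1r dotpZl mulN1r. Qed.

Lemma dotpBl {R : realType} {d : nat} (u v w : 'rV[R]_d) :
  dotp (u - v) w = dotp u w - dotp v w.
Proof. by rewrite dotpDl dotpNl. Qed.

Lemma dotpDr {R : realType} {d : nat} (u v w : 'rV[R]_d) :
  dotp w (u + v) = dotp w u + dotp w v.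
Proof. by rewrite dotpC dotpDl !(dotpC w). Qed.

Lemma dotpZr {R : realType} {d : nat} (a : R) (u w : 'rV[R]_d) :
  dotp w (a *: u) = a * dotp w u.
Proof. by rewrite dotpC dotpZl dotpC. Qed.

Lemma dotpNr {R : realType} {d : nat} (u w : 'rV[R]_d) :
  dotp w (- u) = - dotp w u.
Proof. by rewrite dotpC dotpNl dotpC. Qed.

Lemma dotpBr {R : realType} {d : nat} (u v w : 'rV[R]_d) :
  dotp w (u - v) = dotp w u - dotp w v.
Proof. by rewrite dotpDr dotpNr. Qed.

Lemma dotp_ge0 {R : realType} {d : nat} (u : 'rV[R]_d) : 0 <= dotp u u.
Proof. by apply: sumr_ge0 => i _; rewrite -expr2 sqr_ge0. Qed.

Lemma dotp0_eq {R : realType} {d : nat} (u v : 'rV[R]_d) :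
  dotp u u = 0 -> dotp u v = 0.
Proof.
move=> /eqP; rewrite psumr_eq0 => [H|i _]; last by rewrite -expr2 sqr_ge0.
apply: big1 => i _.
have /implyP := allP H i (mem_index_enum _).
by move=> /(_ isT); rewrite mulf_eq0 orbb => /eqP ->; rewrite mul0r.
Qed.

Lemma enorm_ge0 {R : realType} {d : nat} (u : 'rV[R]_d) : 0 <= enorm u.
Proof. exact: sqrtr_ge0. Qed.

Lemma enorm_sq {R : realType} {d : nat} (u : 'rV[R]_d) : enorm u ^+ 2 = dotp u u.
Proof. by rewrite sqr_sqrtr // dotp_ge0. Qed.

Lemma enormZ {R : realType} {d : nat} (a : R) (u : 'rV[R]_d) :
  enorm (a *: u) = `|a| * enorm u.
Proof.
by rewrite /enorm dotpZl dotpZr mulrA -expr2 sqrtrM ?sqr_ge0 // sqrtr_sqr.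
Qed.

Lemma enormN {R : realType} {d : nat} (u : 'rV[R]_d) : enorm (- u) = enorm u.
Proof. by rewrite /enorm dotpNl dotpNr opprK. Qed.

Lemma CS {R : realType} {d : nat} (u v : 'rV[R]_d) :
  dotp u v <= enorm u * enorm v.
Proof.
set a := enorm u; set b := enorm v.
have ha : a ^+ 2 = dotp u u by exact: enorm_sq.
have hb : b ^+ 2 = dotp v v by exact: enorm_sq.
have a0 : 0 <= a by exact: enorm_ge0.
have b0 : 0 <= b by exact: enorm_ge0.
have key : 0 <= dotp (b *: u - a *: v) (b *: u - a *: v) by exact: dotp_ge0.
rewrite !(dotpBl, dotpBr, dotpZl, dotpZr) -ha -hb (dotpC v u) in key.
have [a_eq0|a_gt0] := eqVneq a 0.
  rewrite a_eq0 mul0r dotp0_eq //; rewrite -ha a_eq0; by rewrite expr0n.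
have [b_eq0|b_gt0] := eqVneq b 0.
  rewrite b_eq0 mulr0 dotpC dotp0_eq //; rewrite -hb b_eq0; by rewrite expr0n.
have ab : 0 < a * b by rewrite mulr_gt0 // lt_def ?a_gt0 ?b_gt0.
rewrite -(ler_pM2l ab).
have -> : a * b * (a * b) = a ^+ 2 * b ^+ 2 by ring.
nra.
Qed.

Lemma dotp_expand {R : realType} {d : nat} (P Q : 'rV[R]_d) (l : R) :
  dotp (P + l *: Q) (P + l *: Q) = dotp P P + 2 * l * dotp P Q + l ^+ 2 * dotp Q Q.
Proof. rewrite dotpDl !dotpDr !dotpZl !dotpZr (dotpC Q P); ring. Qed.

Lemma proj_vi {R : realType} {d : nat} (X : set 'rV[R]_d) (y p z : 'rV[R]_d) :
  convex_set_rV X -> is_proj X y p -> X z -> dotp (y - p) (z - p) <= 0.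
Proof.
move=> cvx [Xp pmin] Xz.
set a := dotp (p - y) (z - p); set b := dotp (z - p) (z - p).
have b0 : 0 <= b by exact: dotp_ge0.
have key : forall l : R, 0 <= l <= 1 -> 0 <= 2 * l * a + l ^+ 2 * b.
  move=> l hl.
  have := pmin _ (cvx _ _ Xz Xp l hl).
  rewrite /enorm ler_sqrt ?dotp_ge0 //.
  have -> : l *: z + (1 - l) *: p - y = (p - y) + l *: (z - p).
    by apply/rowP => i; rewrite !mxE; ring.
  rewrite dotp_expand -/a -/b.
  move=> H; nra.
have -> : dotp (y - p) (z - p) = - a.
  by rewrite /a -dotpNl opprB.
rewrite oppr_le0 leNgt; apply/negP => a_lt0.
pose l := - a / (b - a).
have ba : 0 < b - a by lra.
have hl : l * (b - a) = - a by rewrite /l divfK // gt_eqF.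
have l0 : 0 < l by rewrite /l divr_gt0 // oppr_gt0.
have l1 : l <= 1 by rewrite /l ler_pdivrMr // mul1r; lra.
have := key l; rewrite (ltW l0) l1 => /(_ isT) H.
have H2 : 0 <= 2 * a + l * b.
  rewrite -(pmulr_rge0 _ l0); nra.
have H3 : 0 <= (2 * a + l * b) * (b - a) by apply: mulr_ge0 => //; lra.
nra.
Qed.
Lemma comp_is_derive (R : realType) (d : nat) (Phi : 'rV[R]_d -> R) (g : 'rV[R]_d)
  (x h : 'rV[R]_d) (s : R) :
  differentiable Phi (x + s *: h) -> (forall v, 'd Phi (x + s *: h) v = dotp g v) ->
  is_derive s 1 (fun t : R => Phi (x + t *: h)) (dotp g h).
Proof.
move=> dP dPE.
pose f := (cst x + ( *:%R ^~ h) : R -> 'rV[R]_d).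
have hf : is_diff s f (0 + ( *:%R ^~ h)) by exact: is_diffD.
have df : differentiable f s by case: hf.
have dc : differentiable (Phi \o f) s by apply: differentiable_comp.
have := derivableP (@diff_derivable _ _ _ _ s (1:R) dc).
rewrite deriveE // diff_comp // (diff_val) /= add0r scale1r dPE.
by [].
Qed.

Lemma descent {R : realType} {d : nat} (X : set 'rV[R]_d) (Phi : 'rV[R]_d -> R)
  (gradPhi : 'rV[R]_d -> 'rV[R]_d) (L : R) (x p : 'rV[R]_d) :
  convex_set_rV X -> X x -> X p ->
  (forall y, X y -> differentiable Phi y /\
     forall v, 'd Phi y v = dotp (gradPhi y) v) -> 0 <= L ->
  (forall y z, X y -> X z -> enorm (gradPhi y - gradPhi z) <= L * enorm (y - z)) ->
  Phi x + dotp (gradPhi x) (p - x) - L / 2 * dotp (p - x) (p - x) <= Phi p.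
Proof.
move=> cvx Xx Xp hdiff L0 hlip.
set h := p - x; set a := dotp (gradPhi x) h; set b := L / 2 * dotp h h.
have Xs : forall s : R, 0 <= s <= 1 -> X (x + s *: h).
  move=> s hs; have := cvx _ _ Xp Xx s hs.
  suff -> : s *: p + (1 - s) *: x = x + s *: h by [].
  by apply/rowP => i; rewrite /h !mxE; ring.
pose psi := fun t : R => Phi (x + t *: h) + (- a * t + b * t ^+ 2).
pose df := fun t : R => dotp (gradPhi (x + t *: h)) h + (- a + b * (2 * t)).
have dpsi : forall t : R, 0 <= t <= 1 -> is_derive t 1 psi (df t).
  move=> t ht; have [dP dPE] := hdiff _ (Xs t ht).
  have H1 := (@comp_is_derive R d Phi (gradPhi (x + t*:h)) x h t dP dPE).
  have H2 : is_derive t 1 (fun s : R => - a * s + b * s ^+ 2) (- a + b * (2 * t)).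
    by apply: is_derive_eq; rewrite /GRing.scale /=; ring.
  exact: (is_deriveD H1 H2).
have [c c01 hc] : exists2 c, c \in `]0, 1[%R & psi 1 - psi 0 = df c * (1 - 0).
  apply: MVT => //.
    by move=> t; rewrite in_itv /= => /andP[t0 t1]; apply: dpsi; rewrite !ltW.
  apply: continuous_in_subspaceT => t; rewrite inE /= in_itv /= => ht.
  apply: differentiable_continuous; apply/derivable1_diffP.
  by case: (dpsi t ht).
move: c01; rewrite in_itv /= => /andP[c0 c1].
have Ep : x + 1 *: h = p by rewrite scale1r /h addrC subrK.
have E0 : x + 0 *: h = x by rewrite scale0r addr0.
rewrite /psi /df Ep E0 in hc.
have Xc : X (x + c *: h) by apply: Xs; rewrite !ltW.
set gc := gradPhi (x + c *: h) in hc.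
have hl := hlip _ _ Xc Xx.
have E1 : x + c *: h - x = c *: h by rewrite addrC addKr.
rewrite E1 in hl.
rewrite enormZ gtr0_norm // -/gc in hl.
have cs := CS (- (gc - gradPhi x)) h.
rewrite enormN dotpNl dotpBl -/a in cs.
have hh : enorm h * enorm h = dotp h h by rewrite -expr2 enorm_sq.
have e0 := enorm_ge0 h.
have H3 : enorm (gc - gradPhi x) * enorm h <= L * c * dotp h h.
  rewrite -hh; nra.
rewrite /b in hc *; set q := dotp h h in hc H3 *.
have k1 : Phi p - Phi x - a + L / 2 * q = Phi p + (- a * 1 + L / 2 * q * 1 ^+ 2) -
  (Phi x + (- a * 0 + L / 2 * q * 0 ^+ 2)) by ring.
have k2 : ((dotp gc h + (- a + L / 2 * q * (2 * c))) * (1 - 0) : R) = dotp gc h - a + L * c * q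
  by field.
lra.
Qed.

Lemma avg_sqrt {R : realType} (T : nat) (a : 'I_T -> R) : (0 < T)%N ->
  T%:R^-1 * \sum_(t < T) a t <= Num.sqrt (T%:R^-1 * \sum_(t < T) a t ^+ 2).
Proof.
move=> T0.
have Tp : 0 < T%:R :> R by rewrite ltr0n.
set m := T%:R^-1 * \sum_(t < T) a t.
have [m0|m0] := leP m 0; first exact: le_trans m0 (sqrtr_ge0 _).
have sm : \sum_(t < T) a t = T%:R * m by rewrite /m mulrA mulfV ?gt_eqF // mul1r.
have key : 0 <= \sum_(t < T) (a t - m) ^+ 2 by apply: sumr_ge0 => t _; exact: sqr_ge0.
have ex : \sum_(t < T) (a t - m) ^+ 2
   = \sum_(t < T) a t ^+ 2 - 2 * m * \sum_(t < T) a t + T%:R * m ^+ 2.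
  rewrite (eq_bigr (fun t => a t ^+ 2 + (- (2 * m) * a t + m ^+ 2))); last first.
    by move=> t _; ring.
  rewrite !big_split /= -mulr_sumr sumr_const card_ord -mulr_natl; ring.
rewrite ex sm in key.
rewrite -(ger0_norm (ltW m0)) -sqrtr_sqr ler_sqrt; last first.
  by apply: mulr_ge0; [rewrite invr_ge0 ltW | apply: sumr_ge0 => t _; exact: sqr_ge0].
rewrite ler_pdivlMl //.
nra.
Qed.

Theorem theoremF3 (R : realType) (d : nat) (X : set 'rV[R]_d)
  (Phi : 'rV[R]_d -> R) (gradPhi : 'rV[R]_d -> 'rV[R]_d)
  (Rf : 'rV[R]_d -> 'rV[R]_d)
  (L eta D G Phimax Phimin : R) (T : nat) (x : nat -> 'rV[R]_d) :
  X !=set0 -> closed X -> convex_set_rV X -> compact X ->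
  is_max_on (X `*` X) (fun p => enorm (p.1 - p.2)) D ->
  (forall y, X y -> differentiable Phi y /\
     forall v, 'd Phi y v = dotp (gradPhi y) v) ->
  0 < L ->
  (forall y z, X y -> X z -> enorm (gradPhi y - gradPhi z) <= L * enorm (y - z)) ->
  is_max_on X (fun y => enorm (gradPhi y)) G ->
  is_max_on X Phi Phimax ->
  is_min_on X Phi Phimin ->
  0 < eta -> eta <= L^-1 ->
  (0 < T)%N ->
  X (x 0%N) ->
  (forall t, (t < T)%N -> is_proj X (x t + eta *: gradPhi (x t)) (x t.+1)) ->
  let F := fun y => - gradPhi y + Rf y in
  let E_T := Num.sqrt (T%:R^-1 * \sum_(t < T) enorm (Rf (x t)) ^+ 2) in
  T%:R^-1 * \sum_(t < T) Gap X F (x t)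
    <= (D + eta * G) * Num.sqrt (2 * (Phimax - Phimin) / (T%:R * eta)) + D * E_T.
Proof.
move=> Xne _ cvx _ [[yy _ Dw] DX] hdiff L0 hlip [[yg Xyg Gw] GX].
move=> [_ PmaxX] [_ PminX] eta0 etaL T0 X0 hproj.
cbv zeta; set F := (fun y => - gradPhi y + Rf y); set E_T := Num.sqrt (T%:R^-1 * _).
have D0 : 0 <= D by rewrite -Dw enorm_ge0.
have G0 : 0 <= G by rewrite -Gw enorm_ge0.
have DX' : forall y z, X y -> X z -> enorm (y - z) <= D.
  by move=> y z Xy Xz; exact: (DX (y, z)).
have Le : L * eta <= 1.
  have : L * eta <= L * L^-1 by rewrite ler_pM2l.
  by rewrite mulfV ?gt_eqF.
have Xall : forall t, (t <= T)%N -> X (x t).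
  elim=> [//|t IH] tT.
  by case: (hproj t tT).
pose e := fun t : nat => enorm (x t.+1 - x t).
pose K := (D + eta * G) / eta.
have step : forall t, (t < T)%N ->
   e t ^+ 2 <= 2 * eta * (Phi (x t.+1) - Phi (x t)) /\
   Gap X F (x t) <= K * e t + D * enorm (Rf (x t)).
  move=> t tT.
  have Xt := Xall t (ltnW tT); have Xt1 := Xall t.+1 tT.
  have pj := hproj t tT.
  set g := gradPhi (x t) in pj *; set p := x t.+1 in pj Xt1 *.
  set h := p - x t.
  have Ey : x t + eta *: g - p = eta *: g - h.
    by apply/rowP => i; rewrite /h !mxE; ring.
  have vi1 := proj_vi _ _ _ (x t) cvx pj Xt.
  rewrite Ey (_ : x t - p = - h) in vi1; last by rewrite /h opprB.
  rewrite dotpNr dotpBl dotpZl oppr_le0 in vi1.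
  have desc := descent _ _ _ _ _ _ cvx Xt Xt1 hdiff (ltW L0) hlip.
  rewrite -/g -/h in desc.
  have q0 := dotp_ge0 h.
  have eq : e t ^+ 2 = dotp h h by rewrite enorm_sq.
  split.
    rewrite eq.
    nra.
  apply: ge_sup.
    by case: Xne => z Xz; exists (dotp (F (x t)) (x t - z)); exists z.
  move=> _ [z Xz <-].
  rewrite /F dotpDl dotpNl.
  have c1 := CS (Rf (x t)) (x t - z).
  have c2 := DX' _ _ Xt Xz.
  have r0 := enorm_ge0 (Rf (x t)).
  have c3 : dotp (Rf (x t)) (x t - z) <= D * enorm (Rf (x t)).
    nra.
  have vi2 := proj_vi _ _ _ z cvx pj Xz.
  rewrite Ey dotpBl dotpZl in vi2.
  have c4 := CS h (z - p).
  have c5 := DX' _ _ Xz Xt1.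
  have e0 : 0 <= e t by exact: enorm_ge0.
  have et : e t = enorm h by [].
  have c6 : dotp h (z - p) <= e t * D.
    rewrite et in e0 *; have := enorm_ge0 (z - p); nra.
  have c7 := CS g h.
  have c8 : enorm g <= G by exact: GX.
  have c9 : dotp g h <= G * e t.
    rewrite et in e0 *; have := enorm_ge0 g; nra.
  have split1 : - dotp g (x t - z) = dotp g (z - p) + dotp g h.
    rewrite -dotpDr -dotpNr; congr (dotp g _).
    by apply/rowP => i; rewrite /h !mxE; ring.
  have c10 : eta * (- dotp g (x t - z)) <= e t * D + eta * G * e t.
    rewrite split1 mulrDr; nra.
  have c11 : - dotp g (x t - z) <= K * e t.
    rewrite /K mulrAC ler_pdivlMr //; nra.
  lra.
have Tp : 0 < T%:R :> R by rewrite ltr0n.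
have sumq : \sum_(t < T) e t ^+ 2 <= 2 * eta * (Phimax - Phimin).
  apply: (@le_trans _ _ (\sum_(t < T) 2 * eta * (Phi (x t.+1) - Phi (x t)))).
    by apply: ler_sum => t _; exact: (step t (ltn_ord t)).1.
  rewrite -mulr_sumr -(big_mkord xpredT (fun t => Phi (x t.+1) - Phi (x t))).
  rewrite telescope_sumr //.
  apply: ler_wpM2l; first by rewrite mulr_ge0 // ltW.
  have := PmaxX _ (Xall T (leqnn T)); have := PminX _ X0; lra.
have sumG : \sum_(t < T) Gap X F (x t) <=
    K * \sum_(t < T) e t + D * \sum_(t < T) enorm (Rf (x t)).
  rewrite !mulr_sumr -big_split /=; apply: ler_sum => t _.
  exact: (step t (ltn_ord t)).2.
have avg_e := avg_sqrt T (fun t : 'I_T => e t) T0.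
have avg_r := avg_sqrt T (fun t : 'I_T => enorm (Rf (x t))) T0.
rewrite /= -/E_T in avg_r.
have bound_e : Num.sqrt (T%:R^-1 * \sum_(t < T) e t ^+ 2) <=
    Num.sqrt (T%:R^-1 * (2 * eta * (Phimax - Phimin))).
  rewrite ler_sqrt; first by apply: ler_wpM2l => //; rewrite invr_ge0 ltW.
  apply: mulr_ge0; first by rewrite invr_ge0 ltW.
  apply: le_trans sumq; apply: sumr_ge0 => t _; exact: sqr_ge0.
have eqS : Num.sqrt (T%:R^-1 * (2 * eta * (Phimax - Phimin))) =
    eta * Num.sqrt (2 * (Phimax - Phimin) / (T%:R * eta)).
  rewrite (_ : T%:R^-1 * (2 * eta * (Phimax - Phimin)) =
      eta ^+ 2 * (2 * (Phimax - Phimin) / (T%:R * eta))); last first.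
    by field; rewrite !gt_eqF.
  by rewrite sqrtrM ?sqr_ge0 // sqrtr_sqr gtr0_norm.
rewrite eqS in bound_e.
set S := Num.sqrt (2 * (Phimax - Phimin) / (T%:R * eta)) in bound_e *.
set A := T%:R^-1 * \sum_(t < T) e t in avg_e.
set B := T%:R^-1 * \sum_(t < T) enorm (Rf (x t)) in avg_r.
have K0 : 0 <= K.
  rewrite /K; apply: divr_ge0; last exact: ltW.
  by apply: addr_ge0 => //; apply: mulr_ge0 => //; exact: ltW.
have KA : K * A <= (D + eta * G) * S.
  have -> : (D + eta * G) * S = K * (eta * S) by rewrite /K; field; rewrite gt_eqF.
  apply: ler_wpM2l => //; exact: le_trans avg_e bound_e.
have DB : D * B <= D * E_T by apply: ler_wpM2l.
have : T%:R^-1 * \sum_(t < T) Gap X F (x t) <= K * A + D * B.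
  have -> : K * A + D * B = T%:R^-1 * (K * \sum_(t < T) e t + D * \sum_(t < T) enorm (Rf (x t))).
    by rewrite /A /B; ring.
  by apply: ler_wpM2l => //; rewrite invr_ge0 ltW.
lra.
Qed.
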